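(* For $k\in\mathbb{N}$: (1) $\mathcal{G}(2k)=k+1$; (2) $\beta_f(2k)-(k+2)=O(1/k)$; (3) $\beta_c(2k)-(k+2)\to0$ as $k\to\infty$; (4) $\mathcal{G}(2k+1)-(k+2)=O(1/k)$; (5) $\beta_f(2k+1)-(k+2)\to0$ as $k\to\infty$; (6) $\beta_c(2k+1)-(k+2)\to0$ as $k\to\infty$.
   Context: $\mathcal{G}(2k)=k+1$ and $\mathcal{G}(2k+1)=\frac{k+1+\sqrt{k^2+6k+5}}{2}$. $\beta_f(2k)=\frac{k+1+\sqrt{k^2+6k+1}}{2}$, and $\beta_f(2k+1)$ is the largest real root of $x^3-(k+2)x^2+x-(k+1)=0$. Let $(\lambda_i)_{i\ge0}$ be the Thue–Morse sequence: $\lambda_0=0$, $\lambda_{2i}=\lambda_i$, $\lambda_{2i+1}=1-\lambda_i$. For $i\ge1$ set $\lambda_i(m)=k+\lambda_i-\lambda_{i-1}$ if $m=2k$ and $\lambda_i(m)=k+\lambda_i$ if $m=2k+1$. Then $\beta_c(m)$ is the unique solution $\beta>1$ of $\sum_{i=1}^\infty \lambda_i(m)\beta^{-i}=1$. *)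

(* Defs.v *)
From HB Require Import structures.
From mathcomp Require Import all_boot all_order all_algebra.
From mathcomp Require Import all_classical all_reals all_analysis.
Set Implicit Arguments. Unset Strict Implicit. Unset Printing Implicit Defensive.
Import Order.TTheory GRing.Theory Num.Theory.
Import numFieldNormedType.Exports.
Local Open Scope classical_set_scope.
Local Open Scope ring_scope.

(* Thue--Morse sequence: lambda_0 = 0, lambda_{2i} = lambda_i,
   lambda_{2i+1} = 1 - lambda_i (recursion with fuel; fuel n suffices). *)
Fixpoint thue_morse_aux (fuel n : nat) : nat :=
  match fuel with
  | 0 => 0
  | f.+1 => if n == 0 then 0
            else if odd n then (1 - thue_morse_aux f n./2)%N
            else thue_morse_aux f n./2
  end.
Definition thue_morse (i : nat) : nat := thue_morse_aux i i.

Section Defs.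
Variable R : realType.

Definition GG (m : nat) : R :=
  let k := m./2 in
  if ~~ odd m then k%:R + 1
  else (k%:R + 1 + Num.sqrt (k%:R ^+ 2 + 6 * k%:R + 5)) / 2.

Definition cubic_f (k : nat) (x : R) : R :=
  x ^+ 3 - (k%:R + 2) * x ^+ 2 + x - (k%:R + 1).

Definition beta_f (m : nat) : R :=
  let k := m./2 in
  if ~~ odd m then (k%:R + 1 + Num.sqrt (k%:R ^+ 2 + 6 * k%:R + 1)) / 2
  else sup [set x : R | cubic_f k x = 0].

(* lambda_i(m), for i >= 1. *)
Definition lam (m i : nat) : R :=
  let k := m./2 in
  if ~~ odd m then k%:R + (thue_morse i)%:R - (thue_morse i.-1)%:R
  else k%:R + (thue_morse i)%:R.

Definition beta_c_eq (m : nat) (b : R) : Prop :=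
  1 < b /\
  (fun n : nat => \sum_(0 <= i < n) lam m i.+1 / b ^+ i.+1) @ \oo --> (1 : R).

(* beta_c(m): the unique solution beta > 1 (the sup of the solution set,
   which is that solution when it exists and is unique). *)
Definition beta_c (m : nat) : R := sup [set b : R | beta_c_eq m b].

End Defs.

(* Main.v *)
Require Import Defs.
From HB Require Import structures.
From mathcomp Require Import all_boot all_order all_algebra.
From mathcomp Require Import all_classical all_reals all_analysis.
From mathcomp Require Import ring lra.
Import Order.TTheory GRing.Theory Num.Theory.
Import numFieldNormedType.Exports.
Local Open Scope classical_set_scope.
Local Open Scope ring_scope.

Lemma tm_aux_le1 f n : (thue_morse_aux f n <= 1)%N.
Proof.
elim: f n => [|f IH] n //=.
case: (n == 0%N) => //; case: (odd n) => //; rewrite ?leq_subr //.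
Qed.

Lemma tm_le1 i : (thue_morse i <= 1)%N.
Proof. exact: tm_aux_le1. Qed.

Lemma tm1 : thue_morse 1 = 1%N. Proof. by []. Qed.
Lemma tm2 : thue_morse 2 = 1%N. Proof. by []. Qed.

Section R.
Variable R : realType.

Lemma tmR01 i : 0 <= (thue_morse i)%:R :> R /\ (thue_morse i)%:R <= 1 :> R.
Proof. by split => //; rewrite lern1; exact: tm_le1. Qed.

Lemma to0 (u : nat -> R) (C : R) : 0 < C ->
  (forall k, (1 <= k)%N -> `|u k| <= C / k%:R) -> u @ \oo --> 0.
Proof.
move=> C0 H; apply/cvgrPdist_le => e e0.
near=> k.
have k1 : (1 <= k)%N by near: k; apply: nbhs_infty_ge.
have kC : C / e <= k%:R by near: k; apply: nbhs_infty_ger.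
rewrite sub0r normrN; apply: (le_trans (H k k1)).
have k0 : 0 < k%:R :> R by rewrite ltr0n.
rewrite ler_pdivrMr // mulrC -ler_pdivrMr //.
Unshelve. all: by end_near. Qed.

Definition PS (d : nat -> R) (x : R) (n : nat) := \sum_(0 <= i < n) d i * x ^+ i.+1.

Lemma geo_id (y : R) n : (1 - y) * \sum_(0 <= i < n) y ^+ i.+1 = y - y ^+ n.+1.
Proof.
elim: n => [|n IH]; first by rewrite big_geq // mulr0 expr1 subrr.
rewrite big_nat_recr //= mulrDr IH (exprS y n.+1); ring.
Qed.

Lemma geo_le (y : R) n : 0 <= y < 1 -> \sum_(0 <= i < n) y ^+ i.+1 <= y / (1 - y).
Proof.
move=> /andP[y0 y1]; have h : 0 < 1 - y by rewrite subr_gt0.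
rewrite ler_pdivlMr // mulrC geo_id gerBl exprn_ge0 //.
Qed.

Lemma powdiff (x y r : R) n : 0 <= x <= r -> 0 <= y <= r ->
  `|x ^+ n.+1 - y ^+ n.+1| <= n.+1%:R * r ^+ n * `|x - y|.
Proof.
move=> /andP[x0 xr] /andP[y0 yr]; elim: n => [|n IH].
  by rewrite !expr1 expr0 mulr1 mul1r.
have -> : x ^+ n.+2 - y ^+ n.+2 = x * (x ^+ n.+1 - y ^+ n.+1) + y ^+ n.+1 * (x - y).
  by rewrite !exprS; ring.
apply: (le_trans (ler_normD _ _)); rewrite !normrM.
have r0 : 0 <= r by apply: le_trans xr.
have e1 : `|x| * `|x ^+ n.+1 - y ^+ n.+1| <= r * (n.+1%:R * r ^+ n * `|x - y|).
  by apply: ler_pM => //; rewrite ger0_norm.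
have e2 : `|y ^+ n.+1| * `|x - y| <= r ^+ n.+1 * `|x - y|.
  apply: ler_wpM2r => //; rewrite ger0_norm ?exprn_ge0 //.
  by apply: lerXn2r; rewrite // nnegrE.
apply: le_trans (lerD e1 e2) _.
rewrite -[n.+2]addn1 natrD exprS le_eqVlt; apply/orP; left; apply/eqP; ring.
Qed.

Lemma sum_ir n : \sum_(0 <= i < n) i.+1%:R * (2^-1 : R) ^+ i = 4 - 2 * (n.+2)%:R * (2^-1) ^+ n.
Proof.
elim: n => [|n IH]; first by rewrite big_geq // expr0 mulr1; lra.
rewrite big_nat_recr //= IH exprS.
rewrite -!natr1.
by field.
Qed.

Lemma sum_ir_le n : \sum_(0 <= i < n) i.+1%:R * (2^-1 : R) ^+ i <= 4.
Proof.
rewrite sum_ir gerBl; apply: mulr_ge0; last by rewrite exprn_ge0.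
by apply: mulr_ge0.
Qed.

Lemma lip_cont (f : R -> R) (C : R) : 0 < C ->
  (forall x y, `|f x - f y| <= C * `|x - y|) -> continuous f.
Proof.
move=> C0 H x; apply/cvgrPdist_lt => e e0.
have eC : 0 < e / C by rewrite divr_gt0.
near=> y.
apply: le_lt_trans (H x y) _.
rewrite mulrC -ltr_pdivlMr //.
Unshelve. all: by end_near. Qed.

Section PSd.
Variables (d : nat -> R) (M : R).
Hypothesis dM : forall i, 0 <= d i <= M.

Lemma M0 : 0 <= M. Proof. by case/andP: (dM 0) => h1 h2; apply: le_trans h2. Qed.

Lemma PS_lip x y n : 0 <= x <= 2^-1 -> 0 <= y <= 2^-1 ->
  `|PS d x n - PS d y n| <= 4 * M * `|x - y|.
Proof.
move=> hx hy; rewrite /PS -sumrB.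
apply: le_trans (ler_norm_sum _ _ _) _.
apply: le_trans (_ : \sum_(0 <= i < n) (M * `|x - y|) * (i.+1%:R * (2^-1) ^+ i) <= _).
  apply: ler_sum_nat => i _.
  rewrite -mulrBr normrM.
  case/andP: (dM i) => d0 dm.
  rewrite ger0_norm //.
  have P := @powdiff x y (2^-1) i hx hy.
  apply: le_trans (ler_pM d0 (normr_ge0 _) dm P) _.
  rewrite le_eqVlt; apply/orP; left; apply/eqP; ring.
rewrite -mulr_sumr.
have Mn : 0 <= M * `|x - y| by apply: mulr_ge0; [exact: M0|].
apply: le_trans (ler_wpM2l Mn (sum_ir_le n)) _.
rewrite le_eqVlt; apply/orP; left; apply/eqP; ring.
Qed.

Lemma PS_ndec x : 0 <= x -> nondecreasing_seq (PS d x).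
Proof.
move=> x0; apply/nondecreasing_seqP => n; rewrite /PS big_nat_recr //= lerDl.
by case/andP: (dM n) => d0 _; apply: mulr_ge0 => //; apply: exprn_ge0.
Qed.

Lemma PS_ub x n : 0 <= x <= 2^-1 -> PS d x n <= M.
Proof.
move=> /andP[x0 x1].
apply: le_trans (_ : M * \sum_(0 <= i < n) x ^+ i.+1 <= _).
  rewrite /PS mulr_sumr; apply: ler_sum_nat => i _.
  by case/andP: (dM i) => d0 dm; apply: ler_wpM2r => //; apply: exprn_ge0.
rewrite -[X in _ <= X]mulr1; apply: ler_wpM2l; first exact: M0.
have x1' : x < 1 by apply: le_lt_trans x1 _; lra.
have G : 0 <= x < 1 by rewrite x0 x1'.
apply: le_trans (@geo_le x n G) _.
rewrite ler_pdivrMr; last by lra.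
lra.
Qed.

Lemma PS_cvg x : 0 <= x <= 2^-1 -> cvgn (PS d x).
Proof.
move=> hx; apply: nondecreasing_is_cvgn; first by apply: PS_ndec; case/andP: hx.
by exists M => _ [n _ <-]; apply: PS_ub.
Qed.

End PSd.
Arguments M0 {d M}. Arguments PS_lip {d M}. Arguments PS_ndec {d M}. Arguments PS_ub {d M}. Arguments PS_cvg {d M}.

Definition clamp (x : R) : R := if x < 0 then 0 else if 2^-1 < x then 2^-1 else x.

Lemma clamp_in x : 0 <= clamp x <= 2^-1.
Proof.
rewrite /clamp; have [h1|h1] := ltrP x 0; have [h2|h2] := ltrP (2^-1) x;
  apply/andP; split; lra.
Qed.

Lemma clamp_id x : 0 <= x <= 2^-1 -> clamp x = x.
Proof.
move=> /andP[h1 h2]; rewrite /clamp ltNge h1 /= ltNge h2 //.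
Qed.

Lemma clamp_lip1 x y : x <= y -> 0 <= clamp y - clamp x <= y - x.
Proof.
move=> xy; rewrite /clamp.
have [h1|h1] := ltrP x 0; have [h2|h2] := ltrP (2^-1) x;
have [h3|h3] := ltrP y 0; have [h4|h4] := ltrP (2^-1) y;
  apply/andP; split; lra.
Qed.

Lemma clamp_lip x y : `|clamp x - clamp y| <= `|x - y|.
Proof.
have [xy|xy] := lerP x y.
  have /andP[h1 h2] := @clamp_lip1 x y xy.
  rewrite (distrC (clamp x)) ger0_norm // ler0_norm ?opprB //; lra.
have /andP[h1 h2] := @clamp_lip1 y x (ltW xy).
by rewrite !ger0_norm // subr_ge0 ltW.
Qed.

Definition Gf (d : nat -> R) (x : R) : R := limn (PS d (clamp x)).

Lemma Gf_cvg d M (dM : forall i, 0 <= d i <= M) x : PS d (clamp x) @ \oo --> Gf d x.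
Proof. exact: (PS_cvg dM _ (clamp_in x)). Qed.
Arguments Gf_cvg {d M}.

Lemma Gf_lip d M (dM : forall i, 0 <= d i <= M) x y :
  `|Gf d x - Gf d y| <= 4 * M * `|x - y|.
Proof.
have hc : (fun n => `|PS d (clamp x) n - PS d (clamp y) n|) @ \oo --> `|Gf d x - Gf d y|.
  apply: cvg_norm; exact: (cvgB (Gf_cvg dM x) (Gf_cvg dM y)).
apply: (cvgr_to_le hc); apply: nearW => n /=.
apply: le_trans (PS_lip dM _ _ n (clamp_in x) (clamp_in y)) _.
apply: ler_wpM2l; last exact: clamp_lip.
by apply: mulr_ge0 => //; exact: (M0 dM).
Qed.
Arguments Gf_lip {d M}.

Lemma Gf_cont d M (dM : forall i, 0 <= d i <= M) : continuous (Gf d).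
Proof.
apply: (@lip_cont _ (4 * M + 1)).
  by have := M0 dM; lra.
move=> x y; apply: le_trans (Gf_lip dM x y) _.
by apply: ler_wpM2r => //; lra.
Qed.
Arguments Gf_cont {d M}.

Lemma exists_root d M (dM : forall i, 0 <= d i <= M) a b :
  0 <= a -> a <= b -> b <= 2^-1 ->
  (forall n, PS d a n <= 1) -> (forall n, 1 <= PS d b n.+1) ->
  exists2 x, a <= x <= b & PS d x @ \oo --> (1 : R).
Proof.
move=> a0 ab b2 Ha Hb.
have ca : clamp a = a by apply: clamp_id; rewrite a0 /=; apply: le_trans ab b2.
have cb : clamp b = b by apply: clamp_id; rewrite (le_trans a0 ab) /=.
have ga : Gf d a <= 1.
  apply: (cvgr_to_le (Gf_cvg dM a)); apply: nearW => n /=; rewrite ca; exact: Ha.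
have gb : 1 <= Gf d b.
  apply: (cvgr_to_ge (Gf_cvg dM b)); near=> n.
  have n1 : (1 <= n)%N by near: n; apply: nbhs_infty_ge.
  rewrite cb -(prednK n1); exact: Hb.
have [x hx gx] : exists2 x, x \in `[a, b] & Gf d x = 1.
  apply: IVT => //; first exact: continuous_subspaceT (Gf_cont dM).
  apply/andP; split; first by rewrite ge_min ga.
  by rewrite le_max gb orbT.
move: hx; rewrite in_itv /= => /andP[h1 h2].
exists x; first by rewrite h1 h2.
have hx : 0 <= x <= 2^-1 by rewrite (le_trans a0 h1) (le_trans h2 b2).
by rewrite -gx; have := Gf_cvg dM x; rewrite clamp_id.
Unshelve. all: by end_near. Qed.
Arguments exists_root {d M}.

Lemma PS_geo d M (dM : forall i, 0 <= d i <= M) x n : 0 <= x ->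
  PS d x n <= M * \sum_(0 <= i < n) x ^+ i.+1.
Proof.
move=> x0; rewrite /PS mulr_sumr; apply: ler_sum_nat => i _.
by case/andP: (dM i) => d0 dm; apply: ler_wpM2r => //; apply: exprn_ge0.
Qed.
Arguments PS_geo {d M}.

Lemma sum_inv d (b : R) n : \sum_(0 <= i < n) d i / b ^+ i.+1 = PS d b^-1 n.
Proof. by rewrite /PS; apply: eq_bigr => i _; rewrite exprVn. Qed.

Lemma loc (d : nat -> R) (k b : R) : 1 <= k ->
  (forall i, 0 <= d i <= k + 1) -> d 0%N = k + 1 -> k <= d 1%N -> 1 < b ->
  (fun n => \sum_(0 <= i < n) d i / b ^+ i.+1) @ \oo --> (1 : R) ->
  k + 2 - 3 / (k + 3) <= b <= k + 2.
Proof.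
move=> k1 dM d0 d1 b1 hc.
have dM' : forall i, 0 <= d i <= k + 1 by [].
set y := b^-1.
have b0 : 0 < b by lra.
have y0 : 0 < y by rewrite invr_gt0.
have by1 : b * y = 1 by rewrite mulfV // gt_eqF.
have y1 : y < 1.
  by rewrite -invr1 ltf_pV2 // posrE; lra.
have hc' : PS d y @ \oo --> (1 : R).
  by apply: (cvg_trans _ hc); apply: near_eq_cvg; apply: nearW => n; rewrite sum_inv.
apply/andP; split.
  have p2 : PS d y 2 <= 1.
    have := nondecreasing_cvgn_le (PS_ndec dM' y (ltW y0)) (cvgP _ hc') 2.
    by rewrite (cvg_lim _ hc').
  have e2 : PS d y 2 = d 0%N * y + d 1%N * y ^+ 2.
    by rewrite /PS big_nat_recr //= big_nat1 expr1.
  rewrite e2 d0 in p2.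
  have q : (k + 1) * b + k <= b ^+ 2.
    have h1 : (k + 1) * y + k * y ^+ 2 <= 1.
      apply: le_trans p2; rewrite lerD2l; apply: ler_wpM2r => //; apply: exprn_ge0; exact: ltW.
    have bb : 0 <= b ^+ 2 by apply: exprn_ge0; lra.
    have := ler_wpM2r bb h1.
    have -> : ((k + 1) * y + k * y ^+ 2) * b ^+ 2 = (k + 1) * (b * y) * b + k * (b * y) ^+ 2.
      by ring.
    by rewrite by1 expr1n !mulr1 mul1r.
  set e := k + 2 - b.
  have eq : e ^+ 2 - (k + 3) * e + 2 >= 0.
    have -> : e ^+ 2 - (k + 3) * e + 2 = b ^+ 2 - (k + 1) * b - k by rewrite /e; ring.
    lra.
  have ek : e < k + 1 by rewrite /e; lra.
  have e1 : e < 1.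
    rewrite ltNge; apply/negP => he.
    have : (e - 1) * (e - k - 2) <= 0.
      by rewrite mulr_ge0_le0 //; lra.
    have -> : (e - 1) * (e - k - 2) = e ^+ 2 - (k + 3) * e + 2 + k by ring.
    lra.
  have k3 : 0 < k + 3 by lra.
  rewrite lerBlDr -lerBlDl ler_pdivlMr //.
  rewrite -/e.
  have : e * (k + 3) <= 2 + e ^+ 2 by have := eq; rewrite -subr_ge0 => _; rewrite -subr_ge0; move: eq; rewrite expr2; lra.
  rewrite expr2 => h.
  nra.
rewrite leNgt; apply/negP => bk.
have : 1 <= (k + 1) * (y / (1 - y)).
  apply: (cvgr_to_le hc'); apply: nearW => n.
  apply: le_trans (PS_geo dM' _ n (ltW y0)) _.
  apply: ler_wpM2l; first lra.
  by apply: geo_le; rewrite (ltW y0) y1.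
have y1' : 0 < 1 - y by lra.
rewrite mulrA ler_pdivlMr // mul1r.
nra.
Qed.

Lemma beta_c_bound (m k : nat) : (1 <= k)%N ->
  (forall i, 0 <= lam R m i.+1 <= k%:R + 1) -> lam R m 1 = k%:R + 1 ->
  k%:R <= lam R m 2 ->
  k%:R + 2 - 3 / (k%:R + 3) <= beta_c R m <= k%:R + 2.
Proof.
move=> k1 dM l1 l2.
set d := fun i => lam R m i.+1.
have dM' : forall i, 0 <= d i <= k%:R + 1 by [].
have kR : 1 <= k%:R :> R by rewrite ler1n.
set E := [set b : R | beta_c_eq m b].
have Eloc : forall b, E b -> k%:R + 2 - 3 / (k%:R + 3) <= b <= k%:R + 2.
  move=> b [b1 hb]; apply: (@loc d) => //.
have [x hx cx] : exists2 x, (k%:R + 2)^-1 <= x <= (k%:R + 1)^-1 & PS d x @ \oo --> (1 : R).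
  apply: (exists_root dM').
  - by rewrite invr_ge0; lra.
  - by rewrite lef_pV2 ?posrE; lra.
  - by rewrite lef_pV2 ?posrE; lra.
  - move=> n; apply: le_trans (PS_geo dM' _ n _) _; first by rewrite invr_ge0; lra.
    have a1 : 0 <= ((k%:R + 2)^-1 : R) < 1.
      by rewrite invr_ge0 invf_lt1; lra.
    apply: le_trans (ler_wpM2l _ (@geo_le _ n a1)) _; first lra.
    rewrite le_eqVlt; apply/orP; left; apply/eqP; field.
    by apply/andP; split; lra.
  - move=> n.
    have e1 : PS d (k%:R + 1)^-1 1 = 1.
      rewrite /PS big_nat1 expr1 /d l1 mulfV //; lra.
    have hb0 : 0 <= (k%:R + 1)^-1 :> R by rewrite invr_ge0; lra.
    have h := PS_ndec dM' _ hb0.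
    by rewrite -{1}e1; apply: h.
have x0 : 0 < x by move: hx => /andP[h _]; apply: lt_le_trans h; rewrite invr_gt0; lra.
have xh : x <= 2^-1.
  move: hx => /andP[_ h]; apply: le_trans h _; rewrite lef_pV2 ?posrE; lra.
have Ex : E x^-1.
  split; first by rewrite invf_gt1 //; lra.
  apply: (cvg_trans _ cx); apply: near_eq_cvg; apply: nearW => n.
  by rewrite /= sum_inv invrK.
have ub : ubound E (k%:R + 2) by move=> b /Eloc /andP[].
have hs : has_sup E by split; [exists x^-1 | exists (k%:R + 2)].
apply/andP; split.
  apply: le_trans (sup_upper_bound hs Ex).
  by case/andP: (Eloc _ Ex).
by apply: ge_sup => //; exists x^-1.
Qed.

Lemma half2 k : ((2 * k)./2 = k)%N.
Proof. by rewrite mul2n half_double. Qed.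
Lemma half2S k : ((2 * k).+1./2 = k)%N.
Proof. by have := half_bit_double k true; rewrite add1n mul2n. Qed.
Lemma odd2 k : odd (2 * k) = false.
Proof. by rewrite oddM. Qed.
Lemma odd2S k : odd (2 * k).+1 = true.
Proof. by rewrite /= oddM. Qed.

Lemma lam_even k i : lam R (2 * k) i = k%:R + (thue_morse i)%:R - (thue_morse i.-1)%:R.
Proof. by rewrite /lam odd2 half2. Qed.
Lemma lam_odd k i : lam R (2 * k).+1 i = k%:R + (thue_morse i)%:R.
Proof. by rewrite /lam odd2S half2S. Qed.

Lemma beta_c_even k : (1 <= k)%N ->
  k%:R + 2 - 3 / (k%:R + 3) <= beta_c R (2 * k) <= k%:R + 2.
Proof.
move=> k1; have kR : 1 <= k%:R :> R by rewrite ler1n.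
apply: beta_c_bound => //.
- move=> i; rewrite lam_even /=.
  have [a1 a2] := tmR01 i.+1; have [b1 b2] := tmR01 i.
  by apply/andP; split; lra.
- by rewrite lam_even tm1 /=; rewrite /thue_morse /=; lra.
- by rewrite lam_even tm2 /= tm1; lra.
Qed.

Lemma beta_c_odd k : (1 <= k)%N ->
  k%:R + 2 - 3 / (k%:R + 3) <= beta_c R (2 * k).+1 <= k%:R + 2.
Proof.
move=> k1; have kR : 1 <= k%:R :> R by rewrite ler1n.
apply: beta_c_bound => //.
- move=> i; rewrite lam_odd /=.
  have [a1 a2] := tmR01 i.+1.
  by apply/andP; split; lra.
- by rewrite lam_odd tm1.
- by rewrite lam_odd tm2; lra.
Qed.

Lemma beta_c_lim (u : nat -> R) :
  (forall k, (1 <= k)%N -> k%:R + 2 - 3 / (k%:R + 3) <= u k <= k%:R + 2) ->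
  (fun k => u k - (k%:R + 2)) @ \oo --> 0.
Proof.
move=> H; apply: (@to0 _ 3) => // k k1.
have kR : 1 <= k%:R :> R by rewrite ler1n.
have /andP[h1 h2] := H k k1.
have w0 : 0 < k%:R^-1 :> R by rewrite invr_gt0; lra.
have kw : k%:R * k%:R^-1 = 1 :> R by rewrite mulfV //; lra.
have v0 : 0 < (k%:R + 3)^-1 :> R by rewrite invr_gt0; lra.
have kv : (k%:R + 3) * (k%:R + 3)^-1 = 1 :> R by rewrite mulfV //; lra.
have vw : (k%:R + 3)^-1 <= k%:R^-1 :> R by rewrite lef_pV2 ?posrE; lra.
rewrite ler_norml; apply/andP; split; rewrite /= ?mulrN; lra.
Qed.

Lemma GG_even k : GG R (2 * k) = k%:R + 1.
Proof. by rewrite /GG odd2 half2. Qed.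

Lemma sqrt_bound (kk c : R) : 1 <= kk -> 0 < c -> c <= 8 ->
  `|(kk + 1 + Num.sqrt ((kk + 3) ^+ 2 - c)) / 2 - (kk + 2)| <= c / kk.
Proof.
move=> k1 c0 c8.
have a0 : 0 <= (kk + 3) ^+ 2 - c by rewrite expr2; nra.
set s := Num.sqrt _.
have s0 : 0 <= s by apply: sqrtr_ge0.
have ss : s ^+ 2 = (kk + 3) ^+ 2 - c by rewrite sqr_sqrtr.
have h1 : 0 <= kk + 3 - s.
  rewrite subr_ge0; rewrite -(ler_pXn2r (n:=2)) // ?nnegrE //; last lra.
  rewrite ss; lra.
have h2 : (kk + 3 - s) * kk <= c.
  have -> : c = (kk + 3 - s) * (kk + 3 + s) by rewrite -[X in X = _](subKr ((kk+3)^+2)) -ss; ring.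
  apply: ler_wpM2l => //; lra.
have w0 : 0 < kk^-1 by rewrite invr_gt0; lra.
have kw : kk * kk^-1 = 1 by rewrite mulfV //; lra.
have h3 : kk + 3 - s <= c * kk^-1.
  have := ler_wpM2r (ltW w0) h2; rewrite -mulrA kw mulr1 //.
have -> : (kk + 1 + s) / 2 - (kk + 2) = - ((kk + 3 - s) / 2) by field.
rewrite normrN ger0_norm; last by apply: divr_ge0.
lra.
Qed.

Lemma GG_odd_bound k : (1 <= k)%N -> `|GG R (2 * k).+1 - (k%:R + 2)| <= 4 / k%:R.
Proof.
move=> k1; rewrite /GG odd2S half2S /=.
have -> : k%:R ^+ 2 + 6 * k%:R + 5 = (k%:R + 3) ^+ 2 - 4 :> R by ring.
by apply: sqrt_bound; rewrite ?ler1n //; lra.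
Qed.

Lemma beta_f_even_bound k : (1 <= k)%N -> `|beta_f R (2 * k) - (k%:R + 2)| <= 8 / k%:R.
Proof.
move=> k1; rewrite /beta_f odd2 half2 /=.
have -> : k%:R ^+ 2 + 6 * k%:R + 1 = (k%:R + 3) ^+ 2 - 8 :> R by ring.
by apply: sqrt_bound; rewrite ?ler1n //; lra.
Qed.

Lemma cubic_cont k : continuous (@cubic_f R k).
Proof.
pose p : {poly R} := 'X^3 - (k%:R + 2)%:P * 'X^2 + 'X - (k%:R + 1)%:P.
have -> : @cubic_f R k = horner p.
  by apply: funext => x; rewrite /p /cubic_f !hornerE.
exact: continuous_horner.
Qed.

Lemma beta_f_odd_bound k : (1 <= k)%N ->
  k%:R + 2 - ((k%:R + 1) ^+ 2)^-1 <= beta_f R (2 * k).+1 <= k%:R + 2.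
Proof.
move=> k1; rewrite /beta_f odd2S half2S /=.
have kR : 1 <= k%:R :> R by rewrite ler1n.
set c := k%:R + 1.
set e := (c ^+ 2)^-1.
have c2 : 1 <= c ^+ 2 by rewrite expr2 /c; nra.
have e0 : 0 < e by rewrite invr_gt0; lra.
have ce : c ^+ 2 * e = 1 by rewrite mulfV //; lra.
have e1 : e <= 1 by rewrite /e invf_le1; lra.
set E := [set x : R | @cubic_f R k x = 0].
have ub : ubound E (k%:R + 2).
  move=> x; rewrite /E /= /cubic_f => hx.
  rewrite leNgt; apply/negP => xk.
  have : 0 < x ^+ 2 * (x - (k%:R + 2)) + (x - (k%:R + 1)).
    have : 0 <= x ^+ 2 * (x - (k%:R + 2)).
      by apply: mulr_ge0; [apply: exprn_ge0; lra | lra].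
    lra.
  have -> : x ^+ 2 * (x - (k%:R + 2)) + (x - (k%:R + 1)) =
    x ^+ 3 - (k%:R + 2) * x ^+ 2 + x - (k%:R + 1).
    by rewrite (exprS x 2); ring.
  by rewrite hx ltxx.
set a := k%:R + 2 - e.
have fa : @cubic_f R k a <= 0.
  have ac : c <= a by rewrite /a /c; lra.
  have c0 : 0 <= c by rewrite /c; lra.
  have a2 : c ^+ 2 <= a ^+ 2 by rewrite !expr2; nra.
  have -> : @cubic_f R k a = - e * a ^+ 2 + 1 - e.
    by rewrite /cubic_f /a (exprS _ 2); ring.
  have : 1 <= e * a ^+ 2.
    apply: le_trans (_ : c ^+ 2 * e <= _); first by rewrite ce.
    by rewrite mulrC; apply: ler_wpM2l => //; lra.
  lra.
have fb : 0 <= @cubic_f R k (k%:R + 2).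
  have -> : @cubic_f R k (k%:R + 2) = 1 by rewrite /cubic_f (exprS _ 2); ring.
  lra.
have ab : a <= k%:R + 2 by rewrite /a; lra.
have hv : Num.min (@cubic_f R k a) (@cubic_f R k (k%:R + 2)) <= 0 <=
          Num.max (@cubic_f R k a) (@cubic_f R k (k%:R + 2)).
  by apply/andP; split; [rewrite ge_min fa | rewrite le_max fb orbT].
have [x hx fx] := IVT ab (continuous_subspaceT (@cubic_cont k)) hv.
move: hx; rewrite in_itv /= => /andP[h1 h2].
have Ex : E x by [].
have hs : has_sup E by split; [exists x | exists (k%:R + 2)].
apply/andP; split.
  by apply: le_trans (sup_upper_bound hs Ex).
by apply: ge_sup => //; exists x.
Qed.

Lemma beta_f_odd_lim : (fun k => beta_f R (2 * k).+1 - (k%:R + 2)) @ \oo --> 0.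
Proof.
apply: (@to0 _ 1) => // k k1.
have kR : 1 <= k%:R :> R by rewrite ler1n.
have /andP[h1 h2] := @beta_f_odd_bound k k1.
have c2 : k%:R <= (k%:R + 1) ^+ 2 :> R by rewrite expr2; nra.
have k0 : 0 < k%:R :> R by lra.
have ie : ((k%:R + 1) ^+ 2)^-1 <= 1 / k%:R :> R by rewrite mul1r lef_pV2 ?posrE //; lra.
have ie0 : 0 <= ((k%:R + 1) ^+ 2)^-1 :> R by rewrite invr_ge0; lra.
rewrite ler_norml; apply/andP; split; rewrite /= ?mulrN; lra.
Qed.

End R.

Theorem theorem4p8 (R : realType) :
  (* (1) *)
  (forall k : nat, GG R (2 * k) = k%:R + 1) /\
  (* (2) beta_f(2k) - (k+2) = O(1/k) *)
  (exists C : R, exists N : nat, forall k : nat, (N <= k)%N -> (0 < k)%N ->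
     `|beta_f R (2 * k) - (k%:R + 2)| <= C / k%:R) /\
  (* (3) *)
  ((fun k : nat => beta_c R (2 * k) - (k%:R + 2)) @ \oo --> (0 : R)) /\
  (* (4) G(2k+1) - (k+2) = O(1/k) *)
  (exists C : R, exists N : nat, forall k : nat, (N <= k)%N -> (0 < k)%N ->
     `|GG R (2 * k).+1 - (k%:R + 2)| <= C / k%:R) /\
  (* (5) *)
  ((fun k : nat => beta_f R (2 * k).+1 - (k%:R + 2)) @ \oo --> (0 : R)) /\
  (* (6) *)
  ((fun k : nat => beta_c R (2 * k).+1 - (k%:R + 2)) @ \oo --> (0 : R)).
Proof.
split; first by move=> k; apply: GG_even.
split; first by exists 8, 1%N => k _ k1; apply: beta_f_even_bound.
split; first by apply: beta_c_lim => k k1; apply: beta_c_even.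
split; first by exists 4, 1%N => k _ k1; apply: GG_odd_bound.
split; first exact: beta_f_odd_lim.
by apply: beta_c_lim => k k1; apply: beta_c_odd.
Qed.
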